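(* Let $A\in\mathbb{R}^{nm\times nm}$, let $x=\operatorname{vec}(X)\in S^{nm-1}\cap\mathcal{M}_r$ with thin SVD $X=USV^\top$ ($U^\top U=I_r$, $V^\top V=I_r$, $S$ diagonal positive), and set $\mathfrak{R}(x)=x^\top Ax$, $C=A-\mathfrak{R}(x)I_{nm}$. Let $U_\xi\in\mathbb{R}^{n\times r}$, $V_\xi\in\mathbb{R}^{m\times r}$, $S_\xi\in\mathbb{R}^{r\times r}$ and $\xi=\operatorname{vec}(U_\xi V^\top+UV_\xi^\top+US_\xi V^\top)$, and put \[ \tau_\xi=\begin{bmatrix}\operatorname{vec}(U_\xi)\\ \operatorname{vec}(V_\xi^\top)\\ \operatorname{vec}(S_\xi)\end{bmatrix}\in\mathbb{R}^{nr+mr+r^2}. \] Then the following are equivalent: (a) $U^\top U_\xi=0$, $V^\top V_\xi=0$, $\operatorname{vec}(S_\xi)^\top\operatorname{vec}(S)=0$, and \[ (I-xx^\top)\,\mathrm{P}_{T_X\mathcal{M}_r}\,C\,\mathrm{P}_{T_X\mathcal{M}_r}\,(I-xx^\top)\,\xi=-\mathrm{P}_{T_X\mathcal{M}_r}(I-xx^\top)Ax; \] (b) $B^\top\tau_\xi=0$ and \[ (I-BB^\top)\,C_{\mathrm{loc}}\,(I-BB^\top)\,\tau_\xi=-(I-BB^\top)\,g, \] where \[ B=\begin{bmatrix} I_r\otimes U&0&0\\ 0&V\otimes I_r&0\\ 0&0&\operatorname{vec}(S)\end{bmatrix},\quad C_{\mathrm{loc}}=\begin{bmatrix}C_{v,v}&C_{v,u}&C_{v,vu}\\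 C_{u,v}&C_{u,u}&C_{u,vu}\\ C_{vu,v}&C_{vu,u}&C_{vu,vu}\end{bmatrix},\quad g=\begin{bmatrix}A_{v,v}\operatorname{vec}(US)\\ A_{u,u}\operatorname{vec}(SV^\top)\\ A_{vu,vu}\operatorname{vec}(S)\end{bmatrix}. \]
   Context: $\operatorname{vec}$ is columnwise reshaping, so $\operatorname{vec}(ABC)=(C^\top\otimes A)\operatorname{vec}(B)$. $\mathcal{M}_r$ is the manifold of (vectorized) $n\times m$ matrices of rank exactly $r$, $S^{nm-1}$ the unit sphere in $\mathbb{R}^{nm}$, and $\mathrm{P}_{T_X\mathcal{M}_r}=VV^\top\otimes UU^\top+VV^\top\otimes(I_n-UU^\top)+(I_m-VV^\top)\otimes UU^\top$ is the orthogonal projection onto the tangent space of $\mathcal{M}_r$ at $X$. Define $E_v=V\otimes I_n\in\mathbb{R}^{nm\times nr}$, $E_u=I_m\otimes U\in\mathbb{R}^{nm\times mr}$, $E_{vu}=V\otimes U\in\mathbb{R}^{nm\times r^2}$, and for any $M\in\mathbb{R}^{nm\times nm}$ and $a,b\in\{v,u,vu\}$ set $M_{a,b}=E_a^\top M E_b$ (e.g. $M_{v,v}=(V^\top\otimes I_n)M(V\otimes I_n)$, $M_{v,u}=(V^\top\otimes I_n)M(I_m\otimes U)$, $M_{v,vu}=(V^\top\otimes I_n)M(V\otimes U)$, $M_{u,u}=(I_m\otimes U^\top)M(I_m\otimes U)$, $M_{vu,vu}=(V^\top\otimes U^\top)M(V\otimes U)$). Note $\|\operatorname{vec}(S)\|=\|x\|=1$,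 so $B$ has orthonormal columns. *)

(* Defs.v *)
From HB Require Import structures.
From mathcomp Require Import all_boot all_order all_algebra.
Set Implicit Arguments. Unset Strict Implicit. Unset Printing Implicit Defensive.
Import Order.TTheory GRing.Theory Num.Theory.
Local Open Scope ring_scope.

(* Index arithmetic: k : 'I_(a*b) is identified with the pair (k %/ b, k %% b). *)
Lemma kmod_lt (a b : nat) (k : 'I_(a * b)) : (k %% b < b)%N.
Proof.
case: b k => [|b] k; last by rewrite ltn_mod.
by case: k => k; rewrite muln0.
Qed.

Lemma kdiv_lt (a b : nat) (k : 'I_(a * b)) : (k %/ b < a)%N.
Proof.
case: b k => [|b] k; first by case: k => k; rewrite muln0.
by rewrite ltn_divLR.
Qed.

Definition kdiv (a b : nat) (k : 'I_(a * b)) : 'I_a := Ordinal (kdiv_lt k).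
Definition kmod (a b : nat) (k : 'I_(a * b)) : 'I_b := Ordinal (kmod_lt k).

Definition kron (R : pzRingType) (m1 n1 m2 n2 : nat)
  (A : 'M[R]_(m1, n1)) (B : 'M[R]_(m2, n2)) : 'M[R]_(m1 * m2, n1 * n2) :=
  \matrix_(i, j) (A (kdiv i) (kdiv j) * B (kmod i) (kmod j)).

(* Columnwise vectorization: vec(X)[j*n + i] = X[i,j] for X : n x m. *)
Definition vec (R : pzRingType) (n m : nat) (X : 'M[R]_(n, m)) : 'cV[R]_(m * n) :=
  \col_k X (kmod k) (kdiv k).

(* Orthogonal projection onto the tangent space of M_r at X = U S V^T. *)
Definition PT (R : pzRingType) (n m r : nat) (U : 'M[R]_(n, r)) (V : 'M[R]_(m, r))
  : 'M[R]_(m * n) :=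
  kron (V *m V^T) (U *m U^T) + kron (V *m V^T) (1%:M - U *m U^T)
  + kron (1%:M - V *m V^T) (U *m U^T).

(* Main.v *)
Require Import Defs.
From HB Require Import structures.
From mathcomp Require Import all_boot all_order all_algebra.
Import Order.TTheory GRing.Theory Num.Theory.
Set Implicit Arguments. Unset Strict Implicit. Unset Printing Implicit Defensive.
Local Open Scope ring_scope.

Lemma kpair_lt (a b : nat) (i : 'I_a) (j : 'I_b) : (i * b + j < a * b)%N.
Proof.
case: a i => [|a] [i Hi] //=. case: b j => [|b] [j Hj] //=.
have: (i * b.+1 + j < i * b.+1 + b.+1)%N by rewrite ltn_add2l.
move=> H; apply: (leq_trans H). by rewrite -mulSnr leq_mul2r Hi orbT.
Qed.

Definition kpair (a b : nat) (i : 'I_a) (j : 'I_b) : 'I_(a * b) := Ordinal (kpair_lt i j).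

Lemma kdiv_pair a b (i : 'I_a) (j : 'I_b) : kdiv (kpair i j) = i.
Proof.
apply: val_inj => /=. case: b j => [|b] [j Hj] //=.
by rewrite divnMDl // divn_small // addn0.
Qed.

Lemma kmod_pair a b (i : 'I_a) (j : 'I_b) : kmod (kpair i j) = j.
Proof.
apply: val_inj => /=. case: b j => [|b] [j Hj] //=.
by rewrite modnMDl modn_small.
Qed.

Lemma pair_k a b (k : 'I_(a * b)) : kpair (kdiv k) (kmod k) = k.
Proof. by apply: val_inj => /=; rewrite -divn_eq. Qed.

Lemma sum_kron (R : nmodType) a b (F : 'I_(a * b) -> R) :
  \sum_k F k = \sum_(i < a) \sum_(j < b) F (kpair i j).
Proof.
rewrite pair_big /=.
rewrite (reindex (fun p : 'I_a * 'I_b => kpair p.1 p.2)) //.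
exists (fun k => (kdiv k, kmod k)) => [[i j] _|k _] /=.
  by rewrite kdiv_pair kmod_pair.
by rewrite pair_k.
Qed.

Section K.
Variable R : comPzRingType.

Lemma kron_mul m1 n1 m2 n2 p1 p2 (A : 'M[R]_(m1, n1)) (B : 'M[R]_(m2, n2))
  (C : 'M[R]_(n1, p1)) (D : 'M[R]_(n2, p2)) :
  kron A B *m kron C D = kron (A *m C) (B *m D).
Proof.
apply/matrixP => i j; rewrite !mxE sum_kron.
rewrite big_distrl /=; apply: eq_bigr => k _.
rewrite big_distrr /=; apply: eq_bigr => l _.
rewrite !mxE kdiv_pair kmod_pair.
by rewrite mulrACA.
Qed.

Lemma kron_tr m1 n1 m2 n2 (A : 'M[R]_(m1, n1)) (B : 'M[R]_(m2, n2)) :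
  (kron A B)^T = kron A^T B^T.
Proof. by apply/matrixP => i j; rewrite !mxE. Qed.

Lemma keqE a b (i j : 'I_(a * b)) : (i == j) = (kdiv i == kdiv j) && (kmod i == kmod j).
Proof.
apply/eqP/andP => [->//|[/eqP H1 /eqP H2]].
by rewrite -(pair_k i) -(pair_k j) H1 H2.
Qed.

Lemma kron1 a b : kron (1%:M : 'M[R]_a) (1%:M : 'M[R]_b) = 1%:M.
Proof.
apply/matrixP => i j; rewrite !mxE keqE.
by case: (kdiv i == kdiv j); case: (kmod i == kmod j); rewrite ?mulr1 ?mulr0 ?mul0r.
Qed.

Lemma kronDl m1 n1 m2 n2 (A A' : 'M[R]_(m1, n1)) (B : 'M[R]_(m2, n2)) :
  kron (A + A') B = kron A B + kron A' B.
Proof. by apply/matrixP => i j; rewrite !mxE mulrDl. Qed.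
Lemma kronDr m1 n1 m2 n2 (A : 'M[R]_(m1, n1)) (B B' : 'M[R]_(m2, n2)) :
  kron A (B + B') = kron A B + kron A B'.
Proof. by apply/matrixP => i j; rewrite !mxE mulrDr. Qed.
Lemma kronNl m1 n1 m2 n2 (A : 'M[R]_(m1, n1)) (B : 'M[R]_(m2, n2)) :
  kron (- A) B = - kron A B.
Proof. by apply/matrixP => i j; rewrite !mxE mulNr. Qed.
Lemma kronNr m1 n1 m2 n2 (A : 'M[R]_(m1, n1)) (B : 'M[R]_(m2, n2)) :
  kron A (- B) = - kron A B.
Proof. by apply/matrixP => i j; rewrite !mxE mulrN. Qed.

Lemma vec_mul q n m p (A : 'M[R]_(q, n)) (X : 'M[R]_(n, m)) (B : 'M[R]_(m, p)) :
  vec (A *m X *m B) = kron B^T A *m vec X.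
Proof.
apply/matrixP => k z; rewrite !mxE sum_kron.
apply: eq_bigr => j _.
rewrite !mxE big_distrl /=; apply: eq_bigr => i _.
rewrite !mxE kdiv_pair kmod_pair.
by rewrite mulrC mulrA.
Qed.

Lemma vecD n m (X Y : 'M[R]_(n, m)) : vec (X + Y) = vec X + vec Y.
Proof. by apply/matrixP => i j; rewrite !mxE. Qed.

Lemma vec_eq0 n m (X : 'M[R]_(n, m)) : (vec X == 0) = (X == 0).
Proof.
apply/eqP/eqP => [H|->]; last by apply/matrixP => i j; rewrite !mxE.
apply/matrixP => i j; have := congr1 (fun M : 'cV[R]_(m * n) => M (kpair j i) 0) H.
by rewrite !mxE kdiv_pair kmod_pair.
Qed.
End K.
Lemma eq_oppE (V : zmodType) (a b : V) : a = - b <-> a + b = 0.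
Proof. split => [->|H]; first by rewrite addNr. by rewrite -(addrK b a) H sub0r. Qed.

Section Core.
Variable R : realFieldType.

Lemma tr_self0 k (y : 'cV[R]_k) : y^T *m y = 0 -> y = 0.
Proof.
move=> H; have := congr1 (fun M : 'M[R]_1 => M 0 0) H; rewrite !mxE => /eqP.
rewrite psumr_eq0 => [/allP Hall|i _]; last by rewrite mxE -expr2 sqr_ge0.
apply/matrixP => i j; rewrite (ord1 j) mxE.
have := Hall i (mem_index_enum _); rewrite mxE /= => /eqP.
by move/eqP; rewrite mulf_eq0 orbb => /eqP.
Qed.

Lemma FFt_eq0 N K (F : 'M[R]_(N, K)) (w : 'cV[R]_N) :
  F *m F^T *m w = 0 <-> F^T *m w = 0.
Proof.
split => [H|H]; last by rewrite -mulmxA H mulmx0.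
by apply: tr_self0; rewrite trmx_mul trmxK -mulmxA [F *m _]mulmxA H mulmx0.
Qed.

Lemma core N K L (E : 'M[R]_(N, K)) (B : 'M[R]_(K, L)) (P C A : 'M[R]_N)
  (x : 'cV[R]_N) (c : 'cV[R]_L) (tau : 'cV[R]_K) :
  B^T *m B = 1%:M ->
  E *m (1%:M - B *m B^T) *m E^T = P - x *m x^T ->
  P *m E = E -> P^T = P -> P *m x = x -> E^T *m x = B *m c ->
  B^T *m tau = 0 ->
  ((1%:M - x *m x^T) *m P *m C *m P *m (1%:M - x *m x^T) *m (E *m tau)
      = - (P *m (1%:M - x *m x^T) *m A *m x))
  <-> ((1%:M - B *m B^T) *m (E^T *m C *m E) *m (1%:M - B *m B^T) *m tau
      = - ((1%:M - B *m B^T) *m (E^T *m A *m x))).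
Proof.
move=> hBB hEME hPE hPt hPx hEx hg.
set M := 1%:M - B *m B^T.
have hMt : M^T = M by rewrite /M linearB /= trmx1 trmx_mul trmxK.
have hMM : M *m M = M.
  rewrite /M mulmxBl mul1mx mulmxBr mulmx1 -!mulmxA [B^T *m (B *m _)]mulmxA hBB mul1mx.
  by rewrite subrr subr0.
have hMtau : M *m tau = tau by rewrite /M mulmxBl mul1mx -mulmxA hg mulmx0 subr0.
have hxE : x^T *m (E *m tau) = 0.
  rewrite mulmxA; have -> : x^T *m E = (E^T *m x)^T by rewrite trmx_mul trmxK.
  by rewrite hEx trmx_mul -mulmxA hg mulmx0.
have hIxi : (1%:M - x *m x^T) *m (E *m tau) = E *m tau.
  by rewrite mulmxBl mul1mx -mulmxA hxE mulmx0 subr0.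
have hPxi : P *m (E *m tau) = E *m tau by rewrite mulmxA hPE.
have hxP : x^T *m P = x^T by rewrite -{1}hPt -trmx_mul hPx.
set Q := P - x *m x^T.
have hIxP : (1%:M - x *m x^T) *m P = Q by rewrite mulmxBl mul1mx -mulmxA hxP.
have hPIx : P *m (1%:M - x *m x^T) = Q by rewrite mulmxBr mulmx1 mulmxA hPx.
have hQ : (E *m M) *m (E *m M)^T = Q.
  by rewrite trmx_mul hMt -mulmxA [M *m (M *m _)]mulmxA hMM mulmxA.
set w := C *m (E *m tau) + A *m x.
have e1 : (1%:M - x *m x^T) *m P *m C *m P *m (1%:M - x *m x^T) *m (E *m tau)
    = Q *m C *m (E *m tau).
  by rewrite -mulmxA hIxi -mulmxA hPxi hIxP.
have e2 : P *m (1%:M - x *m x^T) *m A *m x = Q *m A *m x by rewrite hPIx.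
have e3 : M *m (E^T *m C *m E) *m M *m tau = (E *m M)^T *m C *m (E *m tau).
  by rewrite trmx_mul hMt -mulmxA hMtau !mulmxA.
have e4 : M *m (E^T *m A *m x) = (E *m M)^T *m A *m x.
  by rewrite trmx_mul hMt !mulmxA.
rewrite e1 e2 e3 e4 -hQ.
have hw : forall p (F : 'M[R]_(p, N)), F *m C *m (E *m tau) + F *m A *m x = F *m w.
  by move=> p F; rewrite /w mulmxDr !mulmxA.
by split => /eq_oppE; rewrite hw => h; apply/eq_oppE; rewrite hw; apply/FFt_eq0.
Qed.

End Core.

Lemma zmod_id1 (Z : zmodType) (a v u : Z) : a + (v - a) + (u - a) = v + u - a.
Proof. by rewrite [a + _]addrC subrK addrA. Qed.
Lemma zmod_id2 (Z : zmodType) (v u a y : Z) : v + u + a - (a + a + y) = v + u - a - y.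
Proof. by rewrite !opprD !addrA addrK. Qed.

Lemma kronBr (R : comPzRingType) m1 n1 m2 n2 (A : 'M[R]_(m1, n1)) (B B' : 'M[R]_(m2, n2)) :
  kron A (B - B') = kron A B - kron A B'.
Proof. by rewrite kronDr kronNr. Qed.
Lemma kronBl (R : comPzRingType) m1 n1 m2 n2 (A A' : 'M[R]_(m1, n1)) (B : 'M[R]_(m2, n2)) :
  kron (A - A') B = kron A B - kron A' B.
Proof. by rewrite kronDl kronNl. Qed.

Theorem proposition2 (R : realFieldType) (n m r : nat)
  (A : 'M[R]_(m * n)) (X : 'M[R]_(n, m))
  (U : 'M[R]_(n, r)) (S : 'M[R]_r) (V : 'M[R]_(m, r))
  (Uxi : 'M[R]_(n, r)) (Vxi : 'M[R]_(m, r)) (Sxi : 'M[R]_r) :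
  let x := vec X in
  (x^T *m x) 0 0 = 1 ->
  \rank X = r ->
  X = U *m S *m V^T ->
  U^T *m U = 1%:M ->
  V^T *m V = 1%:M ->
  (forall i j : 'I_r, i != j -> S i j = 0) ->
  (forall i : 'I_r, 0 < S i i) ->
  let Rx := (x^T *m A *m x) 0 0 in
  let C := A - Rx%:M in
  let P := PT U V in
  let Ix := 1%:M - x *m x^T in
  let xi := vec (Uxi *m V^T + U *m Vxi^T + U *m Sxi *m V^T) in
  let tau := col_mx (col_mx (vec Uxi) (vec Vxi^T)) (vec Sxi) in
  let Ev := kron V (1%:M : 'M[R]_n) in
  let Eu := kron (1%:M : 'M[R]_m) U in
  let Evu := kron V U in
  let B := block_mx (block_mx (kron (1%:M : 'M[R]_r) U) 0 0
                              (kron V (1%:M : 'M[R]_r))) 0 0 (vec S) in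
  let Cloc := block_mx
      (block_mx (Ev^T *m C *m Ev) (Ev^T *m C *m Eu)
                (Eu^T *m C *m Ev) (Eu^T *m C *m Eu))
      (col_mx (Ev^T *m C *m Evu) (Eu^T *m C *m Evu))
      (row_mx (Evu^T *m C *m Ev) (Evu^T *m C *m Eu))
      (Evu^T *m C *m Evu) in
  let g := col_mx (col_mx (Ev^T *m A *m Ev *m vec (U *m S))
                          (Eu^T *m A *m Eu *m vec (S *m V^T)))
                  (Evu^T *m A *m Evu *m vec S) in
  let IB := 1%:M - B *m B^T in
  ([/\ U^T *m Uxi = 0, V^T *m Vxi = 0, (vec Sxi)^T *m vec S = 0
     & Ix *m P *m C *m P *m Ix *m xi = - (P *m Ix *m A *m x)])
  <->
  (B^T *m tau = 0 /\ IB *m Cloc *m IB *m tau = - (IB *m g)).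
Proof.
move=> x hxx _ hX hU hV _ _ Rx C P Ix xi tau Ev Eu Evu B Cloc g IB.
set K1 := kron (1%:M : 'M[R]_r) U.
set K2 := kron V (1%:M : 'M[R]_r).
set E := row_mx (row_mx Ev Eu) Evu.
have hVVV : V *m V^T *m V = V by rewrite -mulmxA hV mulmx1.
have hUUU : U *m U^T *m U = U by rewrite -mulmxA hU mulmx1.
have hxS : x = Evu *m vec S by rewrite /x hX vec_mul trmxK.
have hEvx : Ev *m vec (U *m S) = x.
  rewrite /x hX.
  have -> : U *m S *m V^T = 1%:M *m (U *m S) *m V^T by rewrite mul1mx.
  by rewrite vec_mul trmxK.
have hEux : Eu *m vec (S *m V^T) = x.
  rewrite /x hX.
  have -> : U *m S *m V^T = U *m (S *m V^T) *m 1%:M by rewrite mulmx1 mulmxA.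
  by rewrite vec_mul trmx1.
have hxi : xi = E *m tau.
  rewrite /xi /E /tau !mul_row_col !vecD.
  have -> : Uxi *m V^T = 1%:M *m Uxi *m V^T by rewrite mul1mx.
  have -> : U *m Vxi^T = U *m Vxi^T *m 1%:M by rewrite mulmx1.
  by rewrite !vec_mul !trmxK trmx1.
have hPs : P = kron (V *m V^T) 1%:M + kron 1%:M (U *m U^T) - kron (V *m V^T) (U *m U^T).
  by rewrite /P /PT kronBr kronBl zmod_id1.
have hPEv : P *m Ev = Ev.
  by rewrite hPs mulmxBl !mulmxDl !kron_mul ?mul1mx ?mulmx1 ?hVVV ?hUUU addrK.
have hPEu : P *m Eu = Eu.
  by rewrite hPs mulmxBl !mulmxDl !kron_mul ?mul1mx ?mulmx1 ?hUUU addrAC subrr add0r.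
have hPEvu : P *m Evu = Evu.
  by rewrite hPs mulmxBl !mulmxDl !kron_mul ?mul1mx ?mulmx1 ?hUUU ?hVVV addrK.
have hPE : P *m E = E by rewrite /E !mul_mx_row hPEv hPEu hPEvu.
have hPt : P^T = P.
  by rewrite hPs !linearB !linearD /= !kron_tr !trmx_mul !trmxK !trmx1.
have hPx : P *m x = x by rewrite hxS mulmxA hPEvu.
have hxx1 : x^T *m x = 1%:M by rewrite [LHS]mx11_scalar hxx.
have hK1 : Ev *m K1 = Evu by rewrite /Ev /K1 kron_mul mulmx1 mul1mx.
have hK2 : Eu *m K2 = Evu by rewrite /Eu /K2 kron_mul mulmx1 mul1mx.
have hEB : E *m B = row_mx (row_mx Evu Evu) x.
  by rewrite /E /B !mul_row_block !mulmx0 !addr0 !add0r hK1 hK2 hxS.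
have hEME : E *m IB *m E^T = P - x *m x^T.
  rewrite /IB mulmxBr mulmx1 mulmxBl mulmxA -[E *m B *m B^T *m E^T]mulmxA -trmx_mul hEB.
  rewrite /E !tr_row_mx !mul_row_col hPs /Ev /Eu /Evu !kron_tr !kron_mul !trmx1 !mulmx1.
  by rewrite zmod_id2.
have hEx : E^T *m x = B *m col_mx (col_mx (vec S) (vec S)) 1%:M.
  rewrite /E /B !tr_row_mx !mul_block_col !mul_col_mx !mul0mx !addr0 !add0r mulmx1.
  rewrite hxS /Ev /Eu /Evu /K1 /K2 !kron_tr !mulmxA !kron_mul !trmx1 !mul1mx hU hV kron1.
  by rewrite mul1mx.
have hSS : (vec S)^T *m vec S = 1%:M.
  by rewrite -hxx1 hxS trmx_mul -mulmxA [Evu^T *m _]mulmxA /Evu kron_tr kron_mul hU hV kron1 mul1mx.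
have hBB : B^T *m B = 1%:M.
  rewrite /B !tr_block_mx !trmx0 !mulmx_block !mulmx0 !mul0mx !addr0 !add0r hSS.
  rewrite /K1 /K2 !kron_tr !kron_mul !trmx1 !mul1mx hU hV !kron1.
  by rewrite -!scalar_mx_block.
have hBt : B^T *m tau = col_mx (col_mx (vec (U^T *m Uxi)) (vec (Vxi^T *m V)))
                      ((vec S)^T *m vec Sxi).
  rewrite /B /tau !tr_block_mx !trmx0 !mul_block_col !mul0mx !addr0 !add0r.
  have -> : U^T *m Uxi = U^T *m Uxi *m 1%:M by rewrite mulmx1.
  have -> : Vxi^T *m V = 1%:M *m Vxi^T *m V by rewrite mul1mx.
  by rewrite !vec_mul /K1 /K2 !kron_tr !trmx1.
have tr0 : forall a b (M : 'M[R]_(a, b)), M^T = 0 <-> M = 0.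
  move=> a b M; split => [h|->]; last exact: trmx0.
  by rewrite -[M]trmxK h trmx0.
have hgauge : B^T *m tau = 0 <->
   [/\ U^T *m Uxi = 0, V^T *m Vxi = 0 & (vec Sxi)^T *m vec S = 0].
  rewrite hBt; split => [/eqP|[h1 h2 h3]].
    rewrite !col_mx_eq0 !vec_eq0 => /andP[/andP[/eqP h1 /eqP h2] /eqP h3].
    split => //; first by apply/tr0; rewrite trmx_mul trmxK.
    by apply/tr0; rewrite trmx_mul trmxK.
  apply/eqP; rewrite !col_mx_eq0 !vec_eq0 h1.
  have -> : Vxi^T *m V = 0 by apply/tr0; rewrite trmx_mul trmxK.
  have -> : (vec S)^T *m vec Sxi = 0 by apply/tr0; rewrite trmx_mul trmxK.
  by rewrite !eqxx.
have hCloc : Cloc = E^T *m C *m E.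
  rewrite /E !tr_row_mx (mul_col_mx (col_mx Ev^T Eu^T)) (mul_col_mx Ev^T).
  rewrite mul_col_row mul_col_row mul_col_mx mul_mx_row.
  by [].
have hg : g = E^T *m A *m x.
  rewrite /E !tr_row_mx !mul_col_mx /g -[Ev^T *m A *m Ev *m _]mulmxA hEvx.
  rewrite -[Eu^T *m A *m Eu *m _]mulmxA hEux -[Evu^T *m A *m Evu *m _]mulmxA -hxS.
  by [].
rewrite hxi hCloc hg; split.
  case=> h1 h2 h3 h4.
  have hg0 : B^T *m tau = 0 by apply/hgauge.
  split => //; exact: (proj1 (core C A hBB hEME hPE hPt hPx hEx hg0) h4).
case=> hg0 h.
have [h1 h2 h3] := proj1 hgauge hg0.
split => //; exact: (proj2 (core C A hBB hEME hPE hPt hPx hEx hg0) h).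
Qed.
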